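(* Let $\mu\in(0,1/2]$ and let $R_{\text{int}},R^{E}_{\text{ext}},R^{M}_{\text{ext}},R_{\text{dou}},R_{\text{ell}}$ be the rotation functions defined in the context. Then: (a) $R_{\text{int}}$ is strictly increasing on $(-\infty,c_J)$, with $\lim_{c\to-\infty}R_{\text{int}}(c)=1$ and $\lim_{c\to c_J}R_{\text{int}}(c)=\infty$. (b) $R^{E}_{\text{ext}}$ is strictly increasing on $(-\infty,0)$ with $\lim_{c\to-\infty}R^{E}_{\text{ext}}(c)=1$; in the symmetric case $\mu=1/2$ one has $\lim_{c\to0^-}R^E_{\text{ext}}(c)=\infty$. (c) $R^{M}_{\text{ext}}$ is strictly increasing on $(-\infty,c_h)$ with $\lim_{c\to-\infty}R^M_{\text{ext}}(c)=1$ and $\lim_{c\to c_h}R^M_{\text{ext}}(c)=\infty$; for $c\in(c_h,0)$, $R^M_{\text{ext}}(c)=\infty$. (d) $R_{\text{dou}}$ is strictly decreasing on $(c_J,c_e)$ with $\lim_{c\to c_J}R_{\text{dou}}(c)=\infty$ and $\lim_{c\to c_e}R_{\text{dou}}(c)=0$; for $c\in(c_e,0)$, $R_{\text{dou}}(c)=0$. (e) $R_{\text{hyp}}=\infty$ on $(c_J,c_h)$. (f) $R_{\text{ell}}$ is strictly increasing on $(c_e,0)$ with $\lim_{c\to c_e}R_{\text{ell}}(c)=0$ and $\lim_{c\to0^-}R_{\text{ell}}(c)=1$.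
   Context: Fix a mass ratio $\mu\in(0,1/2]$ and consider the Euler problem of two fixed centers with Hamiltonian $H(q,p)=\tfrac12|p|^2-\frac{1-\mu}{|q-E|}-\frac{\mu}{|q-M|}$ on $(\mathbb R^2\setminus\{E,M\})\times\mathbb R^2$, $E=(-1/2,0)$, $M=(1/2,0)$. Put $c_J=-1-2\sqrt{\mu(1-\mu)}$ (critical Jacobi energy), $c_e=-1$, $c_h=-1+2\mu$. Let $K(k)=\int_0^{\pi/2}(1-k^2\sin^2\theta)^{-1/2}\,d\theta=\frac{\pi}{2}\sum_{n\ge0}\big(\frac{(2n-1)!!}{(2n)!!}\big)^2k^{2n}$ ($0\le k^2<1$), the complete elliptic integral of the first kind, with $K(1)=+\infty$. The rotation number of an orbit is the ratio $\tau_\eta/\tau_\xi$ of the periods of its oscillations in the elliptic coordinates $\xi=|q-E|+|q-M|$, $\eta=|q-E|-|q-M|$. For the critical periodic orbits this gives the following functions of the energy $c$: - Interior collision orbit ($c<c_J$): $R_{\text{int}}(c)=\frac{2}{\pi}\sqrt{1+r^2}\,K(r)$, where $r^2=\frac{-c-1-A}{-c-1+A}$, $A=\sqrt{c^2+2c+(1-2\mu)^2}$. - Exterior collision orbit in the Earth component ($c<0$): $R^E_{\text{ext}}(c)=\frac{\pi}{2}\frac{1}{\sqrt{1-2k^2}\,K(k)}$, where $k^2=\frac12\big(1-\frac{1-2\mu-c}{\sqrt{c^2-2(1-2\mu)c+1}}\big)$. - Exterior collision orbit in the Moon component ($c<0$): $R^M_{\text{ext}}(c)=\frac{K(r_1)}{\sqrt{|2k^2-1|}\,K(k)}$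 where $k^2=\frac12\big(1+\frac{c+1-2\mu}{\sqrt{c^2+2(1-2\mu)c+1}}\big)$ and $r_1^2=\frac12\big(1+\frac{c+1-2\mu}{|c+1-2\mu|}\big)$ (so $r_1=0$ for $c<c_h$ and $r_1=1$, $K(r_1)=\infty$, for $c>c_h$). - Double-collision orbit: for $c\in(c_J,c_e)$, $R_{\text{dou}}(c)=\frac{2}{\pi}\sqrt{4r_4^2-2}\,K(r_4)$ with $r_4^2=\frac12\big(1-\frac{c+1}{2\sqrt{\mu(1-\mu)}}\big)$; for $c\in(c_e,0)$ the $\xi$-period of this orbit is infinite, so its rotation number is $0$. - Hyperbolic orbit ($c_J<c<c_h$): its $\eta$-period is infinite (it lies on the curve $gc=(1-2\mu)^2$ where the two $\eta$-roots coincide), so $R_{\text{hyp}}=\infty$. - Elliptic orbit ($c_e<c<0$): $R_{\text{ell}}(c)=\frac{2}{\pi}\sqrt{1-2r_4^2}\,K(r_4)$ with $r_4^2=\frac12\big(1+\frac{c^2-1}{\sqrt{c^4+2c^2+1-4(1-2\mu)^2c^2}}\big)$. *)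

(* Defs.v *)
From Stdlib Require Import Reals Lra Lia Classical ClassicalEpsilon.
Open Scope R_scope.

Inductive ER : Type := Fin (x : R) | PInf.

Definition ER_lt (x y : ER) : Prop :=
  match x, y with
  | Fin a, Fin b => a < b
  | Fin _, PInf => True
  | PInf, _ => False
  end.

Definition ER_gt (x : ER) (M : R) : Prop :=
  match x with Fin a => M < a | PInf => True end.

Definition ER_close (x : ER) (L eps : R) : Prop :=
  match x with Fin a => Rabs (a - L) < eps | PInf => False end.

(* a * x for a real factor a (used only with a > 0) *)
Definition ER_mul (a : R) (x : ER) : ER :=
  match x with Fin v => Fin (a * v) | PInf => PInf end.

(* quotient x / y of positive quantities, with finite/infinity = 0 and
   infinity/finite = infinity (infinity/infinity never occurs; set to PInf) *)
Definition ER_div (x y : ER) : ER :=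
  match x, y with
  | Fin a, Fin b => Fin (a / b)
  | PInf, Fin _ => PInf
  | Fin _, PInf => Fin 0
  | PInf, PInf => PInf
  end.

Definition strictly_increasing_on (P : R -> Prop) (f : R -> ER) : Prop :=
  forall x y, P x -> P y -> x < y -> ER_lt (f x) (f y).
Definition strictly_decreasing_on (P : R -> Prop) (f : R -> ER) : Prop :=
  forall x y, P x -> P y -> x < y -> ER_lt (f y) (f x).

Definition lim_minfty_fin (f : R -> ER) (L : R) : Prop :=
  forall eps, 0 < eps -> exists N, forall c, c < N -> ER_close (f c) L eps.
Definition lim_left_fin (f : R -> ER) (a L : R) : Prop :=
  forall eps, 0 < eps -> exists d, 0 < d /\
    forall c, a - d < c < a -> ER_close (f c) L eps.
Definition lim_right_fin (f : R -> ER) (a L : R) : Prop :=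
  forall eps, 0 < eps -> exists d, 0 < d /\
    forall c, a < c < a + d -> ER_close (f c) L eps.
Definition lim_left_inf (f : R -> ER) (a : R) : Prop :=
  forall M, exists d, 0 < d /\ forall c, a - d < c < a -> ER_gt (f c) M.
Definition lim_right_inf (f : R -> ER) (a : R) : Prop :=
  forall M, exists d, 0 < d /\ forall c, a < c < a + d -> ER_gt (f c) M.

(* limit of a real sequence (0 if it does not converge) *)
Definition seq_lim (u : nat -> R) : R :=
  match excluded_middle_informative (exists l, Un_cv u l) with
  | left H => proj1_sig (constructive_indefinite_description _ H)
  | right _ => 0
  end.

(* double factorial n!!, with 0!! = 1 (so (2n-1)!! = 1 for n = 0, using
   truncated nat subtraction, matching the convention (-1)!! = 1) *)
Fixpoint dfact (n : nat) : nat :=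
  match n with
  | O => 1%nat
  | S O => 1%nat
  | S (S m as p) => (S p * dfact m)%nat
  end.

Definition K_coef (n : nat) : R :=
  (INR (dfact (2 * n - 1)) / INR (dfact (2 * n))) ^ 2.

(* K(k) = pi/2 * sum_n ((2n-1)!!/(2n)!!)^2 k^(2n) for k^2 < 1, K = +infinity
   for k^2 >= 1 (only k^2 = 1 is ever used, where K(1) = +infinity) *)
Definition K (k : R) : ER :=
  if Rlt_dec (k ^ 2) 1
  then Fin (PI / 2 * seq_lim (fun N => sum_f_R0 (fun n => K_coef n * k ^ (2 * n)) N))
  else PInf.

Definition c_J (mu : R) : R := -1 - 2 * sqrt (mu * (1 - mu)).
Definition c_e : R := -1.
Definition c_h (mu : R) : R := -1 + 2 * mu.

Definition R_int (mu c : R) : ER :=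
  let A := sqrt (c ^ 2 + 2 * c + (1 - 2 * mu) ^ 2) in
  let r2 := (- c - 1 - A) / (- c - 1 + A) in
  ER_mul (2 / PI * sqrt (1 + r2)) (K (sqrt r2)).

Definition R_ext_E (mu c : R) : ER :=
  let k2 := / 2 * (1 - (1 - 2 * mu - c) / sqrt (c ^ 2 - 2 * (1 - 2 * mu) * c + 1)) in
  ER_div (Fin (PI / 2)) (ER_mul (sqrt (1 - 2 * k2)) (K (sqrt k2))).

Definition R_ext_M (mu c : R) : ER :=
  let k2 := / 2 * (1 + (c + 1 - 2 * mu) / sqrt (c ^ 2 + 2 * (1 - 2 * mu) * c + 1)) in
  let r12 := / 2 * (1 + (c + 1 - 2 * mu) / Rabs (c + 1 - 2 * mu)) in
  ER_div (K (sqrt r12)) (ER_mul (sqrt (Rabs (2 * k2 - 1))) (K (sqrt k2))).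

(* double-collision orbit: formula on (c_J, c_e); rotation number 0 for
   c > c_e, where its xi-period is infinite *)
Definition R_dou (mu c : R) : ER :=
  if Rlt_dec c c_e then
    let r42 := / 2 * (1 - (c + 1) / (2 * sqrt (mu * (1 - mu)))) in
    ER_mul (2 / PI * sqrt (4 * r42 - 2)) (K (sqrt r42))
  else Fin 0.

(* hyperbolic orbit: infinite eta-period *)
Definition R_hyp (mu c : R) : ER := PInf.

Definition R_ell (mu c : R) : ER :=
  let r42 := / 2 * (1 + (c ^ 2 - 1) /
               sqrt (c ^ 4 + 2 * c ^ 2 + 1 - 4 * (1 - 2 * mu) ^ 2 * c ^ 2)) in
  ER_mul (2 / PI * sqrt (1 - 2 * r42)) (K (sqrt r42)).

(* Main.v *)
Require Import Defs.
From Stdlib Require Import Reals.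
Open Scope R_scope.
From Stdlib Require Import Lra Lia Psatz Classical ClassicalEpsilon.
From Coquelicot Require Import Coquelicot.
Open Scope R_scope.

Lemma dfact_pos n : (0 < dfact n)%nat.
Proof.
  induction n as [n IH] using (well_founded_induction Wf_nat.lt_wf).
  destruct n as [|[|n]]; simpl; try lia.
  specialize (IH n ltac:(lia)). nia.
Qed.

Lemma dfact_SS m : dfact (S (S m)) = (S (S m) * dfact m)%nat.
Proof. reflexivity. Qed.

Lemma dfact_even n : dfact (2 * S n) = ((2 * n + 2) * dfact (2 * n))%nat.
Proof. replace (2 * S n)%nat with (S (S (2 * n))) by lia. rewrite dfact_SS. f_equal; lia. Qed.

Lemma dfact_odd n : dfact (2 * S n - 1) = ((2 * n + 1) * dfact (2 * n - 1))%nat.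
Proof.
  destruct n. reflexivity.
  replace (2 * S (S n) - 1)%nat with (S (S (2 * n + 1))) by lia.
  replace (2 * S n - 1)%nat with (2 * n + 1)%nat by lia.
  rewrite dfact_SS. f_equal; lia.
Qed.

Lemma Rle_div_l a b c : 0 < b -> a <= c * b -> a / b <= c.
Proof. intros Hb H. apply Rmult_le_reg_r with b; auto. unfold Rdiv. rewrite Rmult_assoc, Rinv_l; lra. Qed.
Lemma Rle_div_r a b c : 0 < b -> a * b <= c -> a <= c / b.
Proof. intros Hb H. apply Rmult_le_reg_r with b; auto. unfold Rdiv. rewrite Rmult_assoc, Rinv_l; lra. Qed.

Lemma K_coef_S n :
  K_coef (S n) = K_coef n * ((2 * INR n + 1) / (2 * INR n + 2)) ^ 2.
Proof.
  unfold K_coef. rewrite dfact_odd, dfact_even, !mult_INR.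
  rewrite !plus_INR, !mult_INR. replace (INR 2) with 2 by (simpl; lra). replace (INR 1) with 1 by (simpl; lra).
  assert (0 < INR (dfact (2 * n))) by (apply lt_0_INR, dfact_pos).
  assert (0 < INR (dfact (2 * n - 1))) by (apply lt_0_INR, dfact_pos).
  assert (0 <= INR n) by apply pos_INR.
  field. split; [lra|]. replace (n + (n+0))%nat with (2*n)%nat by lia. lra.
Qed.

Lemma K_coef_0 : K_coef 0 = 1.
Proof. unfold K_coef. simpl. lra. Qed.

Lemma K_coef_1 : K_coef 1 = / 4.
Proof. rewrite K_coef_S, K_coef_0. simpl. lra. Qed.

Lemma K_coef_pos n : 0 < K_coef n.
Proof.
  induction n. rewrite K_coef_0; lra.
  rewrite K_coef_S. assert (0 <= INR n) by apply pos_INR.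
  apply Rmult_lt_0_compat; auto. apply pow_lt. apply Rdiv_lt_0_compat; lra.
Qed.

Lemma K_coef_le1 n : K_coef n <= 1.
Proof.
  induction n. rewrite K_coef_0; lra.
  rewrite K_coef_S. assert (0 <= INR n) by apply pos_INR.
  assert (0 <= (2 * INR n + 1) / (2 * INR n + 2) <= 1).
  { split. apply Rlt_le, Rdiv_lt_0_compat; lra. apply Rle_div_l; lra. }
  assert (0 <= ((2 * INR n + 1) / (2 * INR n + 2)) ^ 2 <= 1) by (simpl; nra).
  pose proof (K_coef_pos n). nra.
Qed.

Lemma K_coef_lower n : / (4 * INR (S n)) <= K_coef (S n).
Proof.
  induction n. rewrite K_coef_1. simpl. lra.
  rewrite K_coef_S. rewrite S_INR in *. rewrite S_INR.
  assert (0 <= INR n) by apply pos_INR.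
  set (x := INR n) in *.
  replace (INR (S n)) with (x + 1) by (unfold x; rewrite S_INR; ring).
  replace ((2 * (x + 1) + 1) / (2 * (x + 1) + 2)) with ((2*x+3)/(2*x+4)) by (field; lra).
  apply Rle_trans with (/ (4 * (x + 1)) * ((2 * x + 3) / (2 * x + 4)) ^ 2).
  2: { apply Rmult_le_compat_r. apply pow2_ge_0. exact IHn. }
  replace (/ (4 * (x + 1)) * ((2 * x + 3) / (2 * x + 4)) ^ 2)
     with ((2*x+3)^2 / (4 * (x+1) * (2*x+4)^2)) by (field; lra).
  apply Rle_div_r. nra.
  rewrite Rmult_comm, <- Rdiv_def. apply Rle_div_l. nra. nra.
Qed.

Lemma K_coef_ratio n : INR (S (S n)) * K_coef (S (S n)) <= (2 * INR (S n) + 1) * K_coef (S n).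
Proof.
  rewrite (K_coef_S (S n)). pose proof (K_coef_pos (S n)).
  rewrite !S_INR. assert (0 <= INR n) by apply pos_INR. set (x := INR n) in *.
  set (k := K_coef (S n)) in *.
  replace ((x + 1 + 1) * (k * ((2 * (x + 1) + 1) / (2 * (x + 1) + 2)) ^ 2))
    with (k * ((2*x+3)^2 / (4 * (x + 2)))) by (field; lra).
  replace ((2 * (x + 1) + 1) * k) with (k * (2*x+3)) by ring.
  apply Rmult_le_compat_l. lra. apply Rle_div_l. lra. nra.
Qed.

Definition Sp (m : R) (N : nat) := sum_f_R0 (fun n => K_coef n * m ^ n) N.
Definition F (m : R) := seq_lim (Sp m).

Lemma seq_lim_spec u l : Un_cv u l -> seq_lim u = l.
Proof.
  intros H. unfold seq_lim. destruct excluded_middle_informative as [e|n].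
  - destruct (constructive_indefinite_description _ e) as [l' Hl']. simpl.
    eapply UL_sequence; eauto.
  - exfalso. apply n. eauto.
Qed.

Lemma cv_ge u l M N : Un_cv u l -> (forall n, (N <= n)%nat -> M <= u n) -> M <= l.
Proof.
  intros Hc Hb. destruct (Rle_lt_dec M l) as [h|h]; auto.
  destruct (Hc (M - l)) as [N0 HN]; [lra|].
  specialize (HN (max N N0) ltac:(lia)). specialize (Hb (max N N0) ltac:(lia)).
  unfold Rdist in HN. apply Rabs_def2 in HN. lra.
Qed.

Lemma cv_le u l M N : Un_cv u l -> (forall n, (N <= n)%nat -> u n <= M) -> l <= M.
Proof.
  intros Hc Hb. destruct (Rle_lt_dec l M) as [h|h]; auto.
  destruct (Hc (l - M)) as [N0 HN]; [lra|].
  specialize (HN (max N N0) ltac:(lia)). specialize (Hb (max N N0) ltac:(lia)).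
  unfold Rdist in HN. apply Rabs_def2 in HN. lra.
Qed.

Lemma Sp_S m N : Sp m (S N) = Sp m N + K_coef (S N) * m ^ (S N).
Proof. reflexivity. Qed.

Lemma Sp_0 m : Sp m 0 = 1.
Proof. unfold Sp. simpl. rewrite K_coef_0. ring. Qed.

Lemma Sp_mono m N k : 0 <= m -> Sp m N <= Sp m (N + k).
Proof.
  intros Hm. induction k. rewrite Nat.add_0_r; lra.
  rewrite Nat.add_succ_r, Sp_S. pose proof (K_coef_pos (S (N + k))).
  pose proof (pow_le m (S (N+k)) Hm). nra.
Qed.

Lemma Sp_ge1 m N : 0 <= m -> 1 <= Sp m N.
Proof. intros. rewrite <- (Sp_0 m). apply (Sp_mono m 0 N); auto. Qed.

Lemma Sp_ub m N : 0 <= m < 1 -> Sp m N <= / (1 - m).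
Proof.
  intros Hm. apply Rle_trans with (sum_f_R0 (fun i => m ^ i) N).
  - apply sum_Rle. intros. pose proof (K_coef_le1 n). pose proof (K_coef_pos n).
    pose proof (pow_le m n (proj1 Hm)). nra.
  - rewrite tech3 by lra. pose proof (pow_le m (S N) (proj1 Hm)).
    unfold Rdiv. rewrite <- (Rmult_1_l (/ (1 - m))) at 2. apply Rmult_le_compat_r. apply Rlt_le, Rinv_0_lt_compat; lra. lra.
Qed.

Lemma Sp_cv m : 0 <= m < 1 -> Un_cv (Sp m) (F m).
Proof.
  intros Hm. assert (Hg : Un_growing (Sp m)).
  { intro n. rewrite Sp_S. pose proof (K_coef_pos (S n)).
    pose proof (pow_le m (S n) (proj1 Hm)). nra. }
  assert (Hb : has_ub (Sp m)).
  { exists (/ (1 - m)). intros x [i ->]. apply Sp_ub; auto. }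
  destruct (growing_cv _ Hg Hb) as [l Hl]. unfold F. rewrite (seq_lim_spec _ _ Hl). auto.
Qed.

Lemma F_ge_Sp m N : 0 <= m < 1 -> Sp m N <= F m.
Proof.
  intros Hm. apply (cv_ge _ _ _ N (Sp_cv m Hm)). intros n Hn.
  replace n with (N + (n - N))%nat by lia. apply Sp_mono; lra.
Qed.

Lemma F_ub m : 0 <= m < 1 -> F m <= / (1 - m).
Proof. intros Hm. apply (cv_le _ _ _ 0 (Sp_cv m Hm)). intros. apply Sp_ub; auto. Qed.

Lemma F_ge1 m : 0 <= m < 1 -> 1 <= F m.
Proof. intros Hm. eapply Rle_trans; [apply (Sp_ge1 m 0)|apply F_ge_Sp]; lra. Qed.

Lemma F_pos m : 0 <= m < 1 -> 0 < F m.
Proof. intros. pose proof (F_ge1 m H). lra. Qed.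

Lemma F_0 : F 0 = 1.
Proof.
  pose proof (F_ge1 0 ltac:(lra)). pose proof (F_ub 0 ltac:(lra)).
  replace (/ (1 - 0)) with 1 in H0 by field. lra.
Qed.

Lemma Sp_diff m1 m2 N : 0 <= m1 <= m2 ->
  Sp m1 (S N) + (m2 - m1) / 4 <= Sp m2 (S N).
Proof.
  intros Hm. induction N.
  - unfold Sp. simpl. rewrite K_coef_0, K_coef_1. lra.
  - rewrite !(Sp_S _ (S N)). pose proof (K_coef_pos (S (S N))).
    pose proof (pow_incr m1 m2 (S (S N)) Hm). nra.
Qed.

Lemma F_incr m1 m2 : 0 <= m1 -> m1 < m2 -> m2 < 1 -> F m1 + (m2 - m1) / 4 <= F m2.
Proof.
  intros. assert (Un_cv (fun n => Sp m2 n - Sp m1 n) (F m2 - F m1)).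
  { apply CV_minus; apply Sp_cv; lra. }
  assert ((m2 - m1) / 4 <= F m2 - F m1).
  { apply (cv_ge _ _ _ 1 H2). intros n Hn. destruct n. lia.
    pose proof (Sp_diff m1 m2 n ltac:(lra)). lra. }
  lra.
Qed.

Lemma F_lt m1 m2 : 0 <= m1 -> m1 < m2 -> m2 < 1 -> F m1 < F m2.
Proof. intros. pose proof (F_incr m1 m2 H H0 H1). lra. Qed.

Lemma F_le m1 m2 : 0 <= m1 -> m1 <= m2 -> m2 < 1 -> F m1 <= F m2.
Proof. intros. destruct H0. apply Rlt_le, F_lt; auto. subst; lra. Qed.

Lemma K_sqrt m : 0 <= m < 1 -> K (sqrt m) = Fin (PI / 2 * F m).
Proof.
  intros Hm. unfold K. rewrite pow2_sqrt by lra.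
  destruct (Rlt_dec m 1); [|lra]. do 2 f_equal.
  apply seq_lim_spec. apply Un_cv_ext with (Sp m); [|apply Sp_cv; auto].
  intros N. unfold Sp. apply sum_eq. intros i _. rewrite pow_mult, pow2_sqrt by lra. auto.
Qed.

Lemma K_sqrt1 : K (sqrt 1) = PInf.
Proof. unfold K. rewrite sqrt_1. destruct Rlt_dec; auto. simpl in r. lra. Qed.

Fixpoint Hs (n : nat) : R := match n with O => 0 | S k => Hs k + / INR (S k) end.

Lemma Hs_nonneg n : 0 <= Hs n.
Proof. induction n; cbn [Hs]. lra. pose proof (pos_INR n). rewrite S_INR.
  pose proof (Rinv_0_lt_compat (INR n + 1) ltac:(lra)). lra. Qed.

Lemma Hs_block N k : (1 <= N)%nat -> INR k / INR (N + k) <= Hs (N + k) - Hs N.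
Proof.
  intros HN. assert (1 <= INR N) by (apply (le_INR 1); auto).
  induction k.
  - rewrite Nat.add_0_r. simpl. unfold Rdiv. rewrite Rmult_0_l. lra.
  - rewrite Nat.add_succ_r. cbn [Hs]. rewrite !S_INR. rewrite plus_INR in *.
    pose proof (pos_INR k).
    assert (INR k / (INR N + INR k) >= INR k / (INR N + INR k + 1)).
    { apply Rle_ge. unfold Rdiv. apply Rmult_le_compat_l; auto. apply Rinv_le_contravar; lra. }
    replace ((INR k + 1) / (INR N + INR k + 1)) with (INR k / (INR N + INR k + 1) + / (INR N + INR k + 1)) by (field; lra).
    lra.
Qed.

Lemma Hs_pow j : INR j / 2 <= Hs (2 ^ j).
Proof.
  induction j.
  - cbn. lra.
  - assert (1 <= 2 ^ j)%nat by (pose proof (Nat.pow_le_mono_r 2 0 j); simpl in H; lia).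
    replace (2 ^ S j)%nat with (2 ^ j + 2 ^ j)%nat by (simpl; lia).
    pose proof (Hs_block (2 ^ j) (2 ^ j) H). rewrite plus_INR in H0.
    assert (1 <= INR (2 ^ j)) by (apply (le_INR 1); auto).
    replace (INR (2 ^ j) / (INR (2 ^ j) + INR (2 ^ j))) with (/ 2) in H0 by (field; lra).
    rewrite S_INR. lra.
Qed.

Lemma Hs_unb M : exists N, (1 <= N)%nat /\ M < Hs N.
Proof.
  destruct (INR_archimed (/ 2) M) as [n Hn]; [lra|].
  exists (2 ^ n)%nat. split. pose proof (Nat.pow_le_mono_r 2 0 n); simpl in H; lia.
  pose proof (Hs_pow n). lra.
Qed.

Lemma Sp_Hs m N : 0 <= m <= 1 -> m ^ N * Hs N / 4 <= Sp m N.
Proof.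
  intros Hm. induction N.
  - rewrite Sp_0. simpl. lra.
  - rewrite Sp_S. cbn [Hs]. pose proof (K_coef_lower N). pose proof (Hs_nonneg N).
    assert (m ^ S N <= m ^ N) by (simpl; pose proof (pow_le m N (proj1 Hm)); nra).
    pose proof (pow_le m (S N) (proj1 Hm)).
    pose proof (pos_INR (S N)).
    assert (0 < INR (S N)) by (rewrite S_INR; pose proof (pos_INR N); lra).
    assert (m ^ S N * / INR (S N) / 4 <= K_coef (S N) * m ^ S N).
    { replace (m ^ S N * / INR (S N) / 4) with (/ (4 * INR (S N)) * m ^ S N) by (field; lra).
      apply Rmult_le_compat_r; auto. }
    nra.
Qed.

Lemma bernoulli m N : 0 <= m <= 1 -> 1 - INR N * (1 - m) <= m ^ N.
Proof.
  intros Hm. induction N. simpl; lra.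
  rewrite S_INR. simpl pow. pose proof (pos_INR N).
  pose proof (Rmult_le_compat_l m _ _ (proj1 Hm) IHN).
  assert (0 <= INR N * ((1 - m) * (1 - m))) by (apply Rmult_le_pos; nra). nra.
Qed.

Lemma F_unb M : exists d, 0 < d /\ forall m, 1 - d < m < 1 -> M < F m.
Proof.
  destruct (Hs_unb (8 * Rabs M)) as [N [HN HH]].
  assert (1 <= INR N) by (apply (le_INR 1); auto).
  exists (/ (2 * INR N)). split. apply Rinv_0_lt_compat; lra.
  intros m Hm. assert (/ (2 * INR N) <= / 2) by (apply Rinv_le_contravar; lra).
  assert (0 <= m <= 1) by lra.
  pose proof (bernoulli m N H1).
  assert (INR N * (1 - m) < / 2).
  { replace (/2) with (INR N * / (2 * INR N)) by (field; lra).
    apply Rmult_lt_compat_l; lra. }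
  pose proof (Sp_Hs m N H1). pose proof (F_ge_Sp m N ltac:(lra)).
  pose proof (Rle_abs M). pose proof (Rabs_pos M). pose proof (Hs_nonneg N). nra.
Qed.

Lemma radius_K x : Rabs x < 1 -> Rbar_lt (Rabs x) (CV_radius K_coef).
Proof.
  intros Hx. pose proof (CV_radius_bounded K_coef) as [Hub _].
  set (r := (Rabs x + 1) / 2).
  assert (Hr : Rbar_le r (CV_radius K_coef)).
  { apply Hub. exists 1. intros n. rewrite Rabs_mult.
    rewrite (Rabs_pos_eq (K_coef n)) by (apply Rlt_le, K_coef_pos).
    pose proof (Rabs_pos x).
    assert (0 <= r < 1) by (unfold r; lra).
    rewrite Rabs_pos_eq by (apply pow_le; lra).
    pose proof (pow_lt_1_compat r n). pose proof (K_coef_le1 n). pose proof (K_coef_pos n).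
    pose proof (pow_le r n (proj1 H0)).
    destruct n. simpl. lra. specialize (H1 H0 ltac:(lia)). nra. }
  destruct (CV_radius K_coef) as [l| |]; simpl in *; auto.
  unfold r in Hr. pose proof (Rabs_pos x). lra.
Qed.

Lemma is_pseries_Uncv (a : nat -> R) x l :
  is_pseries a x l -> Un_cv (fun N => sum_f_R0 (fun n => a n * x ^ n) N) l.
Proof.
  intros H. unfold is_pseries in H. apply is_series_Reals in H.
  intros eps Heps. destruct (H eps Heps) as [N HN]. exists N. intros n Hn.
  specialize (HN n Hn).
  assert (E : sum_f_R0 (fun k => a k * x ^ k) n = sum_f_R0 (fun k => scal (pow_n x k) (a k)) n).
  { apply sum_eq. intros i _. replace (pow_n x i) with (x ^ i) by (symmetry; apply (pow_n_pow x i)). unfold scal. simpl. unfold mult. simpl. ring. }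
  rewrite E. exact HN.
Qed.

Lemma PSeries_F x : 0 <= x < 1 -> PSeries K_coef x = F x.
Proof.
  intros Hx. assert (Rabs x < 1) by (rewrite Rabs_pos_eq; lra).
  pose proof (PSeries_correct _ _ (CV_radius_inside _ _ (radius_K x H))) as H1.
  apply is_pseries_Uncv in H1. eapply UL_sequence. exact H1. apply Sp_cv; auto.
Qed.

Definition Gd x := PSeries (PS_derive K_coef) x.

Lemma Gd_cv x : 0 <= x < 1 ->
  Un_cv (fun N => sum_f_R0 (fun n => PS_derive K_coef n * x ^ n) N) (Gd x).
Proof.
  intros Hx. assert (Rabs x < 1) by (rewrite Rabs_pos_eq; lra).
  apply is_pseries_Uncv. apply PSeries_correct. apply ex_pseries_derive. apply radius_K; auto.
Qed.

Definition SD x N := sum_f_R0 (fun n => PS_derive K_coef n * x ^ n) N.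

Lemma T_bound x N : 0 <= x ->
  3 / 4 <= Sp x N - (1 - 2 * x) * SD x N - 2 * (INR (S N) * K_coef (S N)) * x ^ (S N).
Proof.
  intros Hx. induction N.
  - unfold Sp, SD, PS_derive. simpl. rewrite K_coef_0, K_coef_1. lra.
  - rewrite Sp_S. unfold SD. rewrite tech5. fold (SD x N). unfold PS_derive.
    pose proof (K_coef_ratio N). pose proof (pow_le x (S N) Hx).
    replace (x ^ S (S N)) with (x * x ^ S N) by reflexivity.
    nra.
Qed.

Lemma cv_const c : Un_cv (fun _ => c) c.
Proof. intros eps He. exists 0%nat. intros. unfold Rdist. rewrite Rminus_diag, Rabs_R0. lra. Qed.

Lemma FG_pos x : 0 <= x <= 1/2 -> 3 / 4 <= F x - (1 - 2 * x) * Gd x.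
Proof.
  intros Hx.
  assert (Un_cv (fun N => Sp x N - (1 - 2 * x) * SD x N) (F x - (1 - 2 * x) * Gd x)).
  { apply CV_minus. apply Sp_cv; lra. apply CV_mult. apply cv_const. apply Gd_cv; lra. }
  apply (cv_ge _ _ _ 0 H). intros n _. pose proof (T_bound x n (proj1 Hx)).
  pose proof (K_coef_pos (S n)). pose proof (pos_INR (S n)). pose proof (pow_le x (S n) (proj1 Hx)).
  assert (0 <= INR (S n) * K_coef (S n) * x ^ S n) by (apply Rmult_le_pos; [apply Rmult_le_pos|]; lra).
  lra.
Qed.

Definition hh x := (1 - 2 * x) * (PSeries K_coef x * PSeries K_coef x).

Lemma hh_deriv x : 0 <= x <= 1/2 ->
  derivable_pt_lim hh x (-2 * (F x * F x) + (1 - 2 * x) * (Gd x * F x + F x * Gd x)).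
Proof.
  intros Hx. assert (Rabs x < 1) by (rewrite Rabs_pos_eq; lra).
  assert (HP : derivable_pt_lim (PSeries K_coef) x (Gd x)).
  { apply is_derive_Reals. apply is_derive_PSeries. apply radius_K; auto. }
  assert (H1 : derivable_pt_lim (fun y => 1 - 2 * y) x (-2)).
  { replace (-2) with (0 - 2 * 1) by ring.
    apply (derivable_pt_lim_minus (fun _ => 1) (fun y => 2 * y)).
    apply derivable_pt_lim_const. apply derivable_pt_lim_scal. apply derivable_pt_lim_id. }
  pose proof (derivable_pt_lim_mult _ _ _ _ _ HP HP) as H2.
  pose proof (derivable_pt_lim_mult _ _ _ _ _ H1 H2) as H3.
  unfold mult_fct in H3. rewrite PSeries_F in H3 by lra. exact H3.
Qed.

Lemma hh_decr m1 m2 : 0 <= m1 -> m1 < m2 -> m2 < 1/2 -> hh m2 < hh m1.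
Proof.
  intros. destruct (MVT_cor2 hh (fun x => -2 * (F x * F x) + (1 - 2 * x) * (Gd x * F x + F x * Gd x)) m1 m2 H0)
    as [c [Hc1 Hc2]].
  { intros c Hc. apply hh_deriv. lra. }
  pose proof (FG_pos c ltac:(lra)). pose proof (F_ge1 c ltac:(lra)).
  assert (-2 * (F c * F c) + (1 - 2 * c) * (Gd c * F c + F c * Gd c) < 0) by nra.
  nra.
Qed.

Definition gK m := sqrt (1 - 2 * m) * F m.

Lemma gK_decr m1 m2 : 0 <= m1 -> m1 < m2 -> m2 < 1/2 -> gK m2 < gK m1.
Proof.
  intros. pose proof (hh_decr m1 m2 H H0 H1). unfold hh in H2.
  rewrite !PSeries_F in H2 by lra. unfold gK.
  assert (forall m, 0 <= m < 1/2 -> sqrt (1 - 2 * m) * F m = sqrt ((1 - 2 * m) * (F m * F m))).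
  { intros m Hm. rewrite sqrt_mult by (try lra; pose proof (F_pos m ltac:(lra)); nra).
    rewrite sqrt_square; auto. pose proof (F_pos m ltac:(lra)). lra. }
  rewrite !H3 by lra. apply sqrt_lt_1. pose proof (F_pos m2 ltac:(lra)); nra.
  pose proof (F_pos m1 ltac:(lra)); nra. auto.
Qed.

Lemma sqrt_ge_self y : 0 <= y <= 1 -> y <= sqrt y.
Proof.
  intros H. pose proof (sqrt_sqrt y (proj1 H)). pose proof (sqrt_pos y).
  assert (sqrt y <= 1) by (rewrite <- sqrt_1; apply sqrt_le_1_alt; lra). nra.
Qed.

Lemma sqrt_le1 y : y <= 1 -> sqrt y <= 1.
Proof. intros. rewrite <- sqrt_1. apply sqrt_le_1_alt; lra. Qed.

Lemma sqrt_lt_sq y e : 0 <= y -> 0 < e -> y < e * e -> sqrt y < e.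
Proof. intros. rewrite <- (sqrt_square e) by lra. apply sqrt_lt_1; nra. Qed.

Lemma sqrt_ge_sq y e : 0 <= e -> e * e <= y -> e <= sqrt y.
Proof. intros. rewrite <- (sqrt_square e) by lra. apply sqrt_le_1_alt; nra. Qed.

Lemma F_le2 m : 0 <= m <= 1/2 -> F m <= 1 + 2 * m.
Proof.
  intros. apply Rle_trans with (/ (1 - m)). apply F_ub; lra.
  replace (/ (1 - m)) with (1 / (1 - m)) by (field; lra).
  apply Rle_div_l; nra.
Qed.

Lemma gK_pos m : 0 <= m < 1/2 -> 0 < gK m.
Proof. intros. unfold gK. apply Rmult_lt_0_compat. apply sqrt_lt_R0; lra. apply F_pos; lra. Qed.

Lemma gK_up m : 0 <= m < 1/2 -> gK m <= 1 + 2 * m.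
Proof.
  intros. unfold gK. pose proof (sqrt_le1 (1 - 2 * m) ltac:(lra)). pose proof (sqrt_pos (1 - 2*m)).
  pose proof (F_le2 m ltac:(lra)). pose proof (F_pos m ltac:(lra)). nra.
Qed.

Lemma gK_lo m : 0 <= m < 1/2 -> 1 - 2 * m <= gK m.
Proof.
  intros. unfold gK. pose proof (sqrt_ge_self (1 - 2 * m) ltac:(lra)).
  pose proof (F_ge1 m ltac:(lra)). nra.
Qed.

Lemma gK_small m : 0 <= m < 1/2 -> gK m <= 2 * sqrt (1 - 2 * m).
Proof.
  intros. unfold gK. pose proof (F_le2 m ltac:(lra)). pose proof (sqrt_pos (1 - 2*m)). nra.
Qed.

Definition Gw w := gK ((1 - w) / 2).

Lemma Gw_pos w : 0 < w <= 1 -> 0 < Gw w.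
Proof. intros. apply gK_pos; lra. Qed.

Lemma Gw_incr w1 w2 : 0 < w1 -> w1 < w2 -> w2 <= 1 -> Gw w1 < Gw w2.
Proof. intros. apply gK_decr; lra. Qed.

Lemma Gw_close w : 0 < w <= 1 -> Rabs (Gw w - 1) <= 1 - w.
Proof.
  intros. pose proof (gK_up ((1 - w) / 2) ltac:(lra)). pose proof (gK_lo ((1 - w) / 2) ltac:(lra)).
  unfold Gw. apply Rabs_le. lra.
Qed.

Lemma Gw_lo w : 0 < w <= 1 -> w <= Gw w.
Proof. intros. pose proof (gK_lo ((1 - w) / 2) ltac:(lra)). unfold Gw. lra. Qed.

Lemma Gw_small w : 0 < w <= 1 -> Gw w <= 2 * sqrt w.
Proof. intros. pose proof (gK_small ((1 - w) / 2) ltac:(lra)). unfold Gw.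
  replace (1 - 2 * ((1 - w) / 2)) with w in H0 by field. auto. Qed.

Lemma invGw_close w : 1/2 <= w <= 1 -> Rabs (/ Gw w - 1) <= 2 * (1 - w).
Proof.
  intros. pose proof (Gw_close w ltac:(lra)). pose proof (Gw_lo w ltac:(lra)).
  replace (/ Gw w - 1) with ((1 - Gw w) / Gw w) by (field; lra).
  unfold Rdiv. rewrite Rabs_mult, Rabs_inv, (Rabs_pos_eq (Gw w)) by lra.
  rewrite Rabs_minus_sym. apply Rle_trans with ((1 - w) * / Gw w).
  apply Rmult_le_compat_r; [apply Rlt_le, Rinv_0_lt_compat; lra| auto].
  assert (/ Gw w <= 2).
  { replace 2 with (/ (/ 2)) by field. apply Rinv_le_contravar; lra. }
  nra.
Qed.

Lemma invGw_big w M : 0 < w <= 1 -> w < / (4 * ((Rabs M + 1) * (Rabs M + 1))) -> M < / Gw w.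
Proof.
  intros. pose proof (Gw_small w H). pose proof (Gw_pos w H). pose proof (Rabs_pos M).
  assert (sqrt w < / (2 * (Rabs M + 1))).
  { apply sqrt_lt_sq. lra. apply Rinv_0_lt_compat. lra.
    replace (/ (2 * (Rabs M + 1)) * / (2 * (Rabs M + 1))) with (/ (4 * ((Rabs M + 1) * (Rabs M + 1)))) by (field; lra).
    auto. }
  assert (Gw w < / (Rabs M + 1)).
  { eapply Rle_lt_trans. exact H1. replace (/ (Rabs M + 1)) with (2 * / (2 * (Rabs M + 1))).
    lra. field. lra. }
  pose proof (Rle_abs M).
  assert (/ (/ (Rabs M + 1)) < / Gw w) by (apply Rinv_lt_contravar; [apply Rmult_lt_0_compat; [lra|apply Rinv_0_lt_compat; lra]|auto]).
  rewrite Rinv_inv in H7. lra.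
Qed.

Lemma div_lt_cross a b c e : 0 < b -> 0 < e -> a * e < c * b -> a / b < c / e.
Proof.
  intros. apply Rmult_lt_reg_r with (b * e). nra.
  replace (a / b * (b * e)) with (a * e) by (field; lra).
  replace (c / e * (b * e)) with (c * b) by (field; lra). auto.
Qed.

Lemma div_le_cross a b c e : 0 < b -> 0 < e -> a * e <= c * b -> a / b <= c / e.
Proof.
  intros. apply Rmult_le_reg_r with (b * e). nra.
  replace (a / b * (b * e)) with (a * e) by (field; lra).
  replace (c / e * (b * e)) with (c * b) by (field; lra). auto.
Qed.

Definition Qs s d := d / sqrt (d * d + 4 * (s * s)).

Lemma Q_facts s d : 0 < s -> 0 < d ->
  0 < Qs s d < 1 /\ Qs s d <= d / (2 * s) /\ Qs s d * Qs s d = d * d / (d * d + 4 * (s * s)).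
Proof.
  intros Hs Hd. unfold Qs. set (S := sqrt (d * d + 4 * (s * s))).
  assert (HS2 : S * S = d * d + 4 * (s * s)) by (apply sqrt_sqrt; nra).
  assert (HS1 : 2 * s <= S) by (apply sqrt_ge_sq; nra).
  assert (HS3 : d < S) by (pose proof (sqrt_pos (d * d + 4 * (s * s))); fold S in H; nra).
  split; [split|split].
  - apply Rdiv_lt_0_compat; lra.
  - replace 1 with (S / S) by (field; lra). unfold Rdiv. apply Rmult_lt_compat_r.
    apply Rinv_0_lt_compat; lra. auto.
  - unfold Rdiv. apply Rmult_le_compat_l. lra. apply Rinv_le_contravar; lra.
  - rewrite <- HS2. field. lra.
Qed.

Lemma Q_incr s d1 d2 : 0 < s -> 0 < d1 -> d1 < d2 -> Qs s d1 < Qs s d2.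
Proof.
  intros. destruct (Q_facts s d1 H H0) as [[A1 B1] [_ C1]].
  destruct (Q_facts s d2 H ltac:(lra)) as [[A2 B2] [_ C2]].
  assert (Qs s d1 * Qs s d1 < Qs s d2 * Qs s d2).
  { rewrite C1, C2. assert (d1 * d1 < d2 * d2) by nra. assert (0 < s * s) by nra.
    apply div_lt_cross; nra. }
  nra.
Qed.

Lemma Q_near1 s d : 0 < s <= 1/2 -> 1 <= d -> 1 - Qs s d <= / (d * d) /\ 1/2 <= Qs s d.
Proof.
  intros. destruct (Q_facts s d ltac:(lra) ltac:(lra)) as [[A1 B1] [_ C1]].
  assert (4 * (s * s) <= 1) by nra. assert (1 <= d * d) by nra.
  assert (4 * (s * s) * (d * d) <= d * d) by nra.
  assert (Qs s d * Qs s d >= 1/2).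
  { rewrite C1. apply Rle_ge. apply div_le_cross; nra. }
  assert (0 < d * d) by nra. assert (0 < d * d + 4 * (s * s)) by nra.
  assert (1 - Qs s d * Qs s d <= / (d * d)).
  { rewrite C1. replace (1 - d * d / (d * d + 4 * (s * s))) with (4 * (s * s) / (d * d + 4 * (s * s))) by (field; lra).
    replace (/ (d * d)) with (1 / (d * d)) by (field; lra). apply div_le_cross; nra. }
  split; nra.
Qed.

Definition Phi s d := / Gw (Qs s d).

Lemma Phi_decr s d1 d2 : 0 < s -> 0 < d1 -> d1 < d2 -> Phi s d2 < Phi s d1.
Proof.
  intros. unfold Phi. destruct (Q_facts s d1 H H0) as [[A1 B1] _].
  destruct (Q_facts s d2 H ltac:(lra)) as [[A2 B2] _].
  pose proof (Q_incr s d1 d2 H H0 H1).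
  pose proof (Gw_incr _ _ A1 H2 ltac:(lra)). pose proof (Gw_pos (Qs s d1) ltac:(lra)).
  apply Rinv_lt_contravar; auto. nra.
Qed.

Lemma Phi_pos s d : 0 < s -> 0 < d -> 0 < Phi s d.
Proof. intros. destruct (Q_facts s d H H0) as [[A1 B1] _]. unfold Phi.
  apply Rinv_0_lt_compat, Gw_pos; lra. Qed.

Lemma Phi_lim_inf s : 0 < s <= 1/2 -> forall eps, 0 < eps ->
  exists D, forall d, D < d -> Rabs (Phi s d - 1) < eps.
Proof.
  intros Hs eps He. exists (1 + 2 / eps). intros d Hd.
  assert (2 / eps > 0) by (apply Rdiv_lt_0_compat; lra).
  destruct (Q_near1 s d Hs ltac:(lra)) as [H1 H2].
  destruct (Q_facts s d ltac:(lra) ltac:(lra)) as [[A1 B1] _].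
  pose proof (invGw_close (Qs s d) ltac:(lra)). unfold Phi.
  eapply Rle_lt_trans. exact H0.
  assert (/ (d * d) <= / d) by (apply Rinv_le_contravar; nra).
  assert (2 * / d < eps).
  { replace eps with (2 / (2 / eps)) by (field; lra). unfold Rdiv at 2. apply Rmult_lt_compat_l. lra.
    apply Rinv_lt_contravar; nra. }
  lra.
Qed.

Lemma Phi_lim0 s : 0 < s -> forall M, exists del, 0 < del /\
  forall d, 0 < d < del -> M < Phi s d.
Proof.
  intros Hs M. set (tau := / (4 * ((Rabs M + 1) * (Rabs M + 1)))).
  assert (0 < tau) by (unfold tau; pose proof (Rabs_pos M); apply Rinv_0_lt_compat; nra).
  exists (2 * s * tau). split. nra. intros d Hd.
  destruct (Q_facts s d Hs ltac:(lra)) as [[A1 B1] [B2 _]].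
  apply invGw_big. lra.
  eapply Rle_lt_trans. exact B2. apply Rmult_lt_reg_r with (2 * s). lra.
  replace (d / (2 * s) * (2 * s)) with d by (field; lra). fold tau. nra.
Qed.

Lemma mu_facts mu : 0 < mu <= 1/2 ->
  let s := sqrt (mu * (1 - mu)) in
  0 < s <= 1/2 /\ s * s = mu * (1 - mu) /\ 0 <= 1 - 2 * mu < 1.
Proof.
  intros Hmu s. assert (s * s = mu * (1 - mu)) by (apply sqrt_sqrt; nra).
  assert (0 < s) by (apply sqrt_lt_R0; nra).
  split; [split|split]; try lra. nra.
Qed.

Lemma ER_mul_K a m : 0 <= m < 1 -> ER_mul a (K (sqrt m)) = Fin (a * (PI / 2 * F m)).
Proof. intros. rewrite K_sqrt; auto. Qed.

Lemma ext_form Q : 0 < Q < 1 ->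
  ER_div (Fin (PI / 2)) (ER_mul (sqrt Q) (K (sqrt (/ 2 * (1 - Q))))) = Fin (/ Gw Q).
Proof.
  intros HQ. rewrite ER_mul_K by lra. simpl. f_equal.
  unfold Gw, gK. replace (1 - 2 * ((1 - Q) / 2)) with Q by field.
  replace ((1 - Q) / 2) with (/ 2 * (1 - Q)) by field.
  pose proof PI_RGT_0. pose proof (sqrt_lt_R0 Q ltac:(lra)). pose proof (F_pos (/ 2 * (1 - Q)) ltac:(lra)).
  field. lra.
Qed.

Lemma R_ext_E_form mu c : 0 < mu <= 1/2 -> c < 0 ->
  R_ext_E mu c = Fin (Phi (sqrt (mu * (1 - mu))) (1 - 2 * mu - c)).
Proof.
  intros Hmu Hc. destruct (mu_facts mu Hmu) as [Hs [Hss Hb]].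
  set (s := sqrt (mu * (1 - mu))) in *.
  unfold R_ext_E. cbv zeta. set (d := 1 - 2 * mu - c).
  replace (c ^ 2 - 2 * (1 - 2 * mu) * c + 1) with (d * d + 4 * (s * s)) by (unfold d; rewrite Hss; ring).
  change (d / sqrt (d * d + 4 * (s * s))) with (Qs s d).
  destruct (Q_facts s d ltac:(lra) ltac:(unfold d; lra)) as [[A1 B1] _].
  replace (1 - 2 * (/ 2 * (1 - Qs s d))) with (Qs s d) by field.
  rewrite ext_form by lra. reflexivity.
Qed.

Lemma R_ext_M_form mu c : 0 < mu <= 1/2 -> c < c_h mu ->
  R_ext_M mu c = Fin (Phi (sqrt (mu * (1 - mu))) (- c - (1 - 2 * mu))).
Proof.
  intros Hmu Hc. destruct (mu_facts mu Hmu) as [Hs [Hss Hb]]. unfold c_h in Hc.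
  set (s := sqrt (mu * (1 - mu))) in *.
  unfold R_ext_M. cbv zeta. set (d := - c - (1 - 2 * mu)).
  replace (c + 1 - 2 * mu) with (- d) by (unfold d; ring).
  replace (c ^ 2 + 2 * (1 - 2 * mu) * c + 1) with (d * d + 4 * (s * s)) by (unfold d; rewrite Hss; ring).
  replace (- d / sqrt (d * d + 4 * (s * s))) with (- Qs s d) by (unfold Qs, Rdiv; ring).
  assert (0 < d) by (unfold d; lra).
  destruct (Q_facts s d ltac:(lra) ltac:(lra)) as [[A1 B1] _].
  rewrite Rabs_left by lra.
  replace (- d / - - d) with (-1) by (field; lra).
  replace (/ 2 * (1 + -1)) with 0 by field.
  replace (Rabs (2 * (/ 2 * (1 + - Qs s d)) - 1)) with (Qs s d)
    by (rewrite Rabs_left by lra; field).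
  replace (/ 2 * (1 + - Qs s d)) with (/ 2 * (1 - Qs s d)) by ring.
  rewrite K_sqrt by lra. rewrite F_0. replace (PI / 2 * 1) with (PI / 2) by ring.
  rewrite ext_form by lra. reflexivity.
Qed.

Lemma partb mu : 0 < mu <= 1/2 ->
  (strictly_increasing_on (fun c => c < 0) (R_ext_E mu)
   /\ lim_minfty_fin (R_ext_E mu) 1
   /\ (mu = 1 / 2 -> lim_left_inf (R_ext_E mu) 0)).
Proof.
  intros Hmu. destruct (mu_facts mu Hmu) as [Hs [Hss Hb]].
  set (s := sqrt (mu * (1 - mu))) in *.
  split; [|split].
  - intros x y Hx Hy Hxy. rewrite !R_ext_E_form by auto. simpl. fold s.
    apply Phi_decr; lra.
  - intros eps He. destruct (Phi_lim_inf s Hs eps He) as [D HD].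
    exists (Rmin (-1) (1 - 2 * mu - D - 1)). intros c Hc.
    pose proof (Rmin_l (-1) (1 - 2 * mu - D - 1)). pose proof (Rmin_r (-1) (1 - 2 * mu - D - 1)).
    rewrite R_ext_E_form by lra. simpl. fold s. apply HD. lra.
  - intros Hm M. destruct (Phi_lim0 s ltac:(lra) M) as [del [Hd HP]].
    exists del. split; auto. intros c Hc. rewrite R_ext_E_form by lra. simpl. fold s.
    apply HP. subst mu. lra.
Qed.

Lemma partc mu : 0 < mu <= 1/2 ->
  (strictly_increasing_on (fun c => c < c_h mu) (R_ext_M mu)
   /\ lim_minfty_fin (R_ext_M mu) 1
   /\ lim_left_inf (R_ext_M mu) (c_h mu)
   /\ (forall c, c_h mu < c < 0 -> R_ext_M mu c = PInf)).
Proof.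
  intros Hmu. destruct (mu_facts mu Hmu) as [Hs [Hss Hb]].
  set (s := sqrt (mu * (1 - mu))) in *.
  split; [|split; [|split]].
  - intros x y Hx Hy Hxy. rewrite !R_ext_M_form by auto. simpl. fold s. unfold c_h in *.
    apply Phi_decr; lra.
  - intros eps He. destruct (Phi_lim_inf s Hs eps He) as [D HD].
    exists (Rmin (- (1 - 2 * mu) - 1) (- (1 - 2 * mu) - D - 1)). intros c Hc.
    pose proof (Rmin_l (- (1 - 2 * mu) - 1) (- (1 - 2 * mu) - D - 1)).
    pose proof (Rmin_r (- (1 - 2 * mu) - 1) (- (1 - 2 * mu) - D - 1)).
    rewrite R_ext_M_form by (unfold c_h; lra). simpl. fold s. apply HD. lra.
  - intros M. destruct (Phi_lim0 s ltac:(lra) M) as [del [Hd HP]].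
    exists del. split; auto. intros c Hc. rewrite R_ext_M_form by lra. simpl. fold s.
    apply HP. unfold c_h in *. lra.
  - intros c Hc. unfold c_h in Hc. unfold R_ext_M. cbv zeta.
    rewrite (Rabs_pos_eq (c + 1 - 2 * mu)) by lra.
    replace ((c + 1 - 2 * mu) / (c + 1 - 2 * mu)) with 1 by (field; lra).
    replace (/ 2 * (1 + 1)) with 1 by field. rewrite K_sqrt1.
    destruct (ER_mul _ _); reflexivity.
Qed.

Definition Wt s t := (1 - t) / sqrt ((1 - t) * (1 - t) + 16 * (s * s) * t).

Lemma W_facts s t : 0 < s <= 1/2 -> 0 < t < 1 ->
  0 < Wt s t < 1 /\ Wt s t * Wt s t = (1 - t) * (1 - t) / ((1 - t) * (1 - t) + 16 * (s * s) * t)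
  /\ (1/4 <= t -> Wt s t <= (1 - t) / (2 * s)).
Proof.
  intros Hs Ht. unfold Wt. set (D := (1 - t) * (1 - t) + 16 * (s * s) * t).
  assert (P1 : 0 < (1 - t) * (1 - t)) by nra.
  assert (P2 : 0 < s * s * t) by (apply Rmult_lt_0_compat; nra).
  assert (HD : 0 < D) by (unfold D; nra).
  set (S := sqrt D). assert (HS2 : S * S = D) by (apply sqrt_sqrt; lra).
  assert (HS3 : 1 - t < S) by (pose proof (sqrt_pos D); fold S in H; unfold D in HS2; nra).
  split; [split|split].
  - apply Rdiv_lt_0_compat; lra.
  - replace 1 with (S / S) at 2 by (field; lra). unfold Rdiv. apply Rmult_lt_compat_r.
    apply Rinv_0_lt_compat; lra. auto.
  - rewrite <- HS2. field. lra.
  - intros Ht4. assert (2 * s <= S) by (apply sqrt_ge_sq; unfold D; nra).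
    unfold Rdiv. apply Rmult_le_compat_l. lra. apply Rinv_le_contravar; lra.
Qed.

Lemma W_decr s t1 t2 : 0 < s <= 1/2 -> 0 < t2 -> t2 < t1 -> t1 < 1 -> Wt s t1 < Wt s t2.
Proof.
  intros. destruct (W_facts s t1 H ltac:(lra)) as [[A1 B1] [C1 _]].
  destruct (W_facts s t2 H ltac:(lra)) as [[A2 B2] [C2 _]].
  assert (Wt s t1 * Wt s t1 < Wt s t2 * Wt s t2).
  { rewrite C1, C2. assert (0 < s * s) by nra.
    assert ((1 - t1) * (1 - t1) * t2 < (1 - t2) * (1 - t2) * t1).
    { assert ((1 - t1) * (1 - t1) < (1 - t2) * (1 - t2)) by nra.
      assert (0 < (1 - t1) * (1 - t1)) by nra. nra. }
    apply div_lt_cross; nra. }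
  nra.
Qed.

Lemma W_near1 s t : 0 < s <= 1/2 -> 0 < t <= 1/4 -> 1 - Wt s t <= 8 * t.
Proof.
  intros. destruct (W_facts s t H ltac:(lra)) as [[A1 B1] [C1 _]].
  assert (1 - Wt s t * Wt s t <= 8 * t).
  { rewrite C1. assert (0 < (1 - t) * (1 - t)) by nra. assert (0 < s * s) by nra.
    assert (0 < s * s * t) by (apply Rmult_lt_0_compat; nra).
    assert (0 < (1 - t) * (1 - t) + 16 * (s * s) * t) by nra.
    replace (1 - (1 - t) * (1 - t) / ((1 - t) * (1 - t) + 16 * (s * s) * t))
      with (16 * (s * s) * t / ((1 - t) * (1 - t) + 16 * (s * s) * t)) by (field; lra).
    apply Rle_div_l. lra. assert (s * s <= 1/4) by nra.
    assert (16 * (s * s) * t <= 4 * t) by (assert (0 <= (1/4 - s * s) * t) by (apply Rmult_le_pos; lra); nra).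
    assert (9/16 <= (1 - t) * (1 - t)) by nra. nra. }
  nra.
Qed.

Lemma R_ell_form mu c : 0 < mu <= 1/2 -> -1 < c < 0 ->
  R_ell mu c = Fin (Gw (Wt (sqrt (mu * (1 - mu))) (c * c))).
Proof.
  intros Hmu Hc. destruct (mu_facts mu Hmu) as [Hs [Hss Hb]].
  set (s := sqrt (mu * (1 - mu))) in *.
  unfold R_ell. cbv zeta.
  replace (c ^ 4 + 2 * c ^ 2 + 1 - 4 * (1 - 2 * mu) ^ 2 * c ^ 2)
    with ((1 - c * c) * (1 - c * c) + 16 * (s * s) * (c * c)) by (rewrite Hss; ring).
  replace ((c ^ 2 - 1) / sqrt ((1 - c * c) * (1 - c * c) + 16 * (s * s) * (c * c)))
    with (- Wt s (c * c)) by (unfold Wt, Rdiv; ring).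
  assert (0 < c * c < 1) by nra.
  destruct (W_facts s (c * c) Hs H) as [[A1 B1] _].
  replace (1 - 2 * (/ 2 * (1 + - Wt s (c * c)))) with (Wt s (c * c)) by field.
  rewrite K_sqrt by lra. cbn [ER_mul]. f_equal. unfold Gw, gK.
  replace (1 - 2 * ((1 - Wt s (c * c)) / 2)) with (Wt s (c * c)) by field.
  replace ((1 - Wt s (c * c)) / 2) with (/ 2 * (1 + - Wt s (c * c))) by field.
  pose proof PI_RGT_0. field. lra.
Qed.

Lemma partf mu : 0 < mu <= 1/2 ->
  (strictly_increasing_on (fun c => c_e < c < 0) (R_ell mu)
   /\ lim_right_fin (R_ell mu) c_e 0
   /\ lim_left_fin (R_ell mu) 0 1).
Proof.
  intros Hmu. destruct (mu_facts mu Hmu) as [Hs [Hss Hb]].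
  set (s := sqrt (mu * (1 - mu))) in *. unfold c_e.
  split; [|split].
  - intros x y Hx Hy Hxy. rewrite !R_ell_form by auto. simpl. fold s.
    assert (0 < y * y) by nra. assert (y * y < x * x) by nra. assert (x * x < 1) by nra.
    pose proof (W_decr s (x * x) (y * y) Hs H H0 H1).
    destruct (W_facts s (x * x) Hs ltac:(lra)) as [[A1 B1] _].
    destruct (W_facts s (y * y) Hs ltac:(lra)) as [[A2 B2] _].
    apply Gw_incr; lra.
  - intros eps He. exists (Rmin (1/2) (s * (eps * eps) / 8)). split.
    { apply Rmin_glb_lt. lra. apply Rdiv_lt_0_compat; [|lra]. apply Rmult_lt_0_compat; nra. }
    intros c Hc. pose proof (Rmin_l (1/2) (s * (eps * eps) / 8)).
    pose proof (Rmin_r (1/2) (s * (eps * eps) / 8)).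
    rewrite R_ell_form by lra. simpl. fold s.
    assert (0 < c * c < 1) by nra. assert (1/4 <= c * c) by nra.
    destruct (W_facts s (c * c) Hs H1) as [[A1 B1] [_ C1]]. specialize (C1 H2).
    pose proof (Gw_small _ (conj A1 (Rlt_le _ _ B1))). pose proof (Gw_pos _ (conj A1 (Rlt_le _ _ B1))).
    rewrite Rminus_0_r, Rabs_pos_eq by lra.
    assert (1 - c * c < 2 * (c + 1)) by nra.
    assert (Wt s (c * c) < eps * eps / 4).
    { eapply Rle_lt_trans. exact C1. apply Rmult_lt_reg_r with (2 * s). lra.
      replace ((1 - c * c) / (2 * s) * (2 * s)) with (1 - c * c) by (field; lra).
      assert (c + 1 < s * (eps * eps) / 8) by lra. nra. }
    assert (sqrt (Wt s (c * c)) < eps / 2) by (apply sqrt_lt_sq; nra).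
    lra.
  - intros eps He. exists (Rmin (1/2) (eps / 8)). split.
    { apply Rmin_glb_lt; lra. }
    intros c Hc. pose proof (Rmin_l (1/2) (eps / 8)). pose proof (Rmin_r (1/2) (eps / 8)).
    rewrite R_ell_form by lra. simpl. fold s.
    assert (0 < c * c <= 1/4) by nra.
    assert (0 < c * c < 1) by nra.
    destruct (W_facts s (c * c) Hs H2) as [[A1 B1] _].
    pose proof (W_near1 s (c * c) Hs H1).
    pose proof (Gw_close _ (conj A1 (Rlt_le _ _ B1))).
    assert (8 * (c * c) < eps) by nra. lra.
Qed.

Lemma Rlt_div_l' a b c : 0 < b -> a < c * b -> a / b < c.
Proof. intros Hb H. apply Rmult_lt_reg_r with b; auto. unfold Rdiv. rewrite Rmult_assoc, Rinv_l; lra. Qed.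

Definition hd y := sqrt (2 * y) * F ((1 + y) / 2).

Lemma hd_incr y1 y2 : 0 < y1 -> y1 < y2 -> y2 < 1 -> hd y1 < hd y2.
Proof.
  intros. unfold hd. pose proof (sqrt_lt_1 (2 * y1) (2 * y2) ltac:(lra) ltac:(lra) ltac:(lra)).
  pose proof (F_lt ((1 + y1) / 2) ((1 + y2) / 2) ltac:(lra) ltac:(lra) ltac:(lra)).
  pose proof (F_pos ((1 + y1) / 2) ltac:(lra)). pose proof (sqrt_pos (2 * y1)). nra.
Qed.

Lemma R_dou_form mu c : 0 < mu <= 1/2 -> c_J mu < c < c_e ->
  R_dou mu c = Fin (hd (- (c + 1) / (2 * sqrt (mu * (1 - mu))))).
Proof.
  intros Hmu Hc. destruct (mu_facts mu Hmu) as [Hs [Hss Hb]].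
  set (s := sqrt (mu * (1 - mu))) in *. unfold c_J, c_e in Hc. fold s in Hc.
  unfold R_dou. destruct (Rlt_dec c c_e) as [_|n]; [|unfold c_e in n; lra].
  cbv zeta. fold s. set (y := - (c + 1) / (2 * s)).
  assert (0 < y < 1).
  { unfold y. split. apply Rdiv_lt_0_compat; lra. apply Rlt_div_l'; lra. }
  replace (/ 2 * (1 - (c + 1) / (2 * s))) with ((1 + y) / 2) by (unfold y; field; lra).
  replace (4 * ((1 + y) / 2) - 2) with (2 * y) by field.
  rewrite K_sqrt by lra. cbn [ER_mul]. f_equal. unfold hd. pose proof PI_RGT_0. field. lra.
Qed.

Lemma partd mu : 0 < mu <= 1/2 ->
  (strictly_decreasing_on (fun c => c_J mu < c < c_e) (R_dou mu)
   /\ lim_right_inf (R_dou mu) (c_J mu)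
   /\ lim_left_fin (R_dou mu) c_e 0
   /\ (forall c, c_e < c < 0 -> R_dou mu c = Fin 0)).
Proof.
  intros Hmu. destruct (mu_facts mu Hmu) as [Hs [Hss Hb]].
  set (s := sqrt (mu * (1 - mu))) in *.
  assert (HJ : c_J mu = -1 - 2 * s) by reflexivity.
  split; [|split; [|split]].
  - intros x y Hx Hy Hxy. rewrite !R_dou_form by auto. simpl. fold s. unfold c_e in *.
    apply hd_incr.
    + apply Rdiv_lt_0_compat; lra.
    + unfold Rdiv. apply Rmult_lt_compat_r. apply Rinv_0_lt_compat; lra. lra.
    + apply Rlt_div_l'; lra.
  - intros M. destruct (F_unb M) as [del [Hd HF]].
    exists (Rmin s (4 * s * del)). split. apply Rmin_glb_lt; nra.
    intros c Hc. pose proof (Rmin_l s (4 * s * del)). pose proof (Rmin_r s (4 * s * del)).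
    rewrite R_dou_form by (auto; unfold c_e; lra). simpl. fold s.
    set (y := - (c + 1) / (2 * s)).
    assert (1 - y = (c - c_J mu) / (2 * s)) by (unfold y; rewrite HJ; field; lra).
    assert (1 - y <= 1/2 /\ 1 - y < 2 * del).
    { rewrite H1. split; [apply Rle_div_l|apply Rlt_div_l']; lra. }
    assert (0 < 1 - y) by (rewrite H1; apply Rdiv_lt_0_compat; lra).
    unfold hd. assert (1 <= sqrt (2 * y)) by (apply sqrt_ge_sq; lra).
    pose proof (HF ((1 + y) / 2) ltac:(lra)). pose proof (F_pos ((1 + y) / 2) ltac:(lra)). nra.
  - intros eps He. exists (Rmin s (s * (eps * eps) / 16)). split.
    { apply Rmin_glb_lt. lra. apply Rdiv_lt_0_compat; [|lra]. apply Rmult_lt_0_compat; nra. }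
    intros c Hc. pose proof (Rmin_l s (s * (eps * eps) / 16)). pose proof (Rmin_r s (s * (eps * eps) / 16)).
    unfold c_e in *. rewrite R_dou_form by (auto; unfold c_e; lra). simpl. fold s.
    set (y := - (c + 1) / (2 * s)).
    assert (0 < y) by (unfold y; apply Rdiv_lt_0_compat; lra).
    assert (y <= 1/2 /\ y < eps * eps / 32).
    { unfold y. split. apply Rle_div_l; lra. apply Rlt_div_l'. lra.
      assert (- (c + 1) < s * (eps * eps) / 16) by lra. nra. }
    unfold hd. rewrite Rminus_0_r.
    pose proof (F_le ((1 + y) / 2) (3/4) ltac:(lra) ltac:(lra) ltac:(lra)) as Fa.
    pose proof (F_ub (3/4) ltac:(lra)) as Fb. replace (/ (1 - 3/4)) with 4 in Fb by field.
    pose proof (F_pos ((1 + y) / 2) ltac:(lra)). pose proof (sqrt_pos (2 * y)).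
    rewrite Rabs_pos_eq by nra.
    assert (sqrt (2 * y) < eps / 4) by (apply sqrt_lt_sq; nra).
    nra.
  - intros c Hc. unfold R_dou. destruct (Rlt_dec c c_e); auto. lra.
Qed.

Definition h1 m := sqrt (1 + m) * F m.

Lemma h1_incr m1 m2 : 0 <= m1 -> m1 < m2 -> m2 < 1 -> h1 m1 < h1 m2.
Proof.
  intros. unfold h1. pose proof (sqrt_le_1_alt (1 + m1) (1 + m2) ltac:(lra)).
  pose proof (F_lt m1 m2 H H0 H1). pose proof (F_pos m1 ltac:(lra)).
  assert (1 <= sqrt (1 + m1)) by (apply sqrt_ge_sq; lra). nra.
Qed.

Lemma h1_ge_F m : 0 <= m < 1 -> F m <= h1 m.
Proof.
  intros. unfold h1. assert (1 <= sqrt (1 + m)) by (apply sqrt_ge_sq; lra).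
  pose proof (F_pos m H). nra.
Qed.

Lemma h1_close m : 0 <= m <= 1/2 -> Rabs (h1 m - 1) <= 4 * m.
Proof.
  intros. unfold h1. assert (1 <= sqrt (1 + m)) by (apply sqrt_ge_sq; lra).
  assert (sqrt (1 + m) <= 1 + m).
  { pose proof (sqrt_sqrt (1 + m) ltac:(lra)). nra. }
  pose proof (F_ge1 m ltac:(lra)). pose proof (F_le2 m H).
  apply Rabs_le. split; nra.
Qed.

Lemma int_facts mu c : 0 < mu <= 1/2 -> c < c_J mu ->
  let s := sqrt (mu * (1 - mu)) in
  let x := - c - 1 in
  let A := sqrt (c ^ 2 + 2 * c + (1 - 2 * mu) ^ 2) in
  2 * s < x /\ A * A = x * x - 4 * (s * s) /\ 0 <= A < x /\
  (- c - 1 - A) / (- c - 1 + A) = 4 * (s * s) / ((x + A) * (x + A)) /\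
  1 - (- c - 1 - A) / (- c - 1 + A) = 2 * A / (x + A) /\
  R_int mu c = Fin (h1 ((- c - 1 - A) / (- c - 1 + A))).
Proof.
  intros Hmu Hc s x A. destruct (mu_facts mu Hmu) as [Hs [Hss Hb]]. fold s in Hs, Hss.
  assert (Hx : 2 * s < x) by (unfold x; unfold c_J in Hc; fold s in Hc; lra).
  assert (HA2 : A * A = x * x - 4 * (s * s)).
  { unfold A. rewrite sqrt_sqrt. unfold x. rewrite Hss. ring.
    replace (c ^ 2 + 2 * c + (1 - 2 * mu) ^ 2) with (x * x - 4 * (s * s)) by (unfold x; rewrite Hss; ring). nra. }
  assert (HA0 : 0 <= A) by apply sqrt_pos.
  assert (HAx : A < x) by nra.
  assert (E1 : (- c - 1 - A) / (- c - 1 + A) = 4 * (s * s) / ((x + A) * (x + A))).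
  { fold x. replace (4 * (s * s)) with (x * x - A * A) by lra. field. lra. }
  split; [lra|split; [auto|split; [lra|split; [auto|split]]]].
  - fold x. field. lra.
  - unfold R_int. cbv zeta. fold A.
    assert (0 < 4 * (s * s) / ((x + A) * (x + A)) < 1).
    { split. apply Rdiv_lt_0_compat; nra. apply Rlt_div_l'; nra. }
    rewrite E1. rewrite K_sqrt by lra. cbn [ER_mul]. f_equal. unfold h1.
    pose proof PI_RGT_0. field. lra.
Qed.

Lemma parta mu : 0 < mu <= 1/2 ->
  (strictly_increasing_on (fun c => c < c_J mu) (R_int mu)
   /\ lim_minfty_fin (R_int mu) 1
   /\ lim_left_inf (R_int mu) (c_J mu)).
Proof.
  intros Hmu. destruct (mu_facts mu Hmu) as [Hs [Hss Hb]].
  set (s := sqrt (mu * (1 - mu))) in *.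
  assert (HJ : c_J mu = -1 - 2 * s) by reflexivity.
  split; [|split].
  - intros c1 c2 H1 H2 H12.
    destruct (int_facts mu c1 Hmu H1) as [X1 [A1 [B1 [C1 [_ R1]]]]].
    destruct (int_facts mu c2 Hmu H2) as [X2 [A2 [B2 [C2 [_ R2]]]]].
    rewrite R1, R2. cbn [ER_lt ER_close ER_gt]. fold s in X1, A1, B1, C1, X2, A2, B2, C2 |- *. rewrite C1, C2.
    set (Aa := sqrt (c1 ^ 2 + 2 * c1 + (1 - 2 * mu) ^ 2)) in *.
    set (Ab := sqrt (c2 ^ 2 + 2 * c2 + (1 - 2 * mu) ^ 2)) in *.
    assert (Ab <= Aa).
    { destruct (Rle_lt_dec Ab Aa); auto. nra. }
    apply h1_incr.
    + apply Rlt_le, Rdiv_lt_0_compat; nra.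
    + assert (0 < - c2 - 1 + Ab) by lra. assert (- c2 - 1 + Ab < - c1 - 1 + Aa) by lra.
      assert ((- c2 - 1 + Ab) * (- c2 - 1 + Ab) < (- c1 - 1 + Aa) * (- c1 - 1 + Aa)) by nra.
      assert (0 < s * s) by nra.
      apply div_lt_cross; nra.
    + apply Rlt_div_l'; nra.
  - intros eps He. exists (-3 - 4 / eps). intros c Hc.
    assert (4 / eps > 0) by (apply Rdiv_lt_0_compat; lra).
    assert (c < c_J mu) by (rewrite HJ; lra).
    destruct (int_facts mu c Hmu H0) as [X1 [A1 [B1 [C1 [_ R1]]]]].
    rewrite R1. cbn [ER_lt ER_close ER_gt]. fold s in X1, A1, B1, C1 |- *. rewrite C1.
    set (x := - c - 1) in *. set (Aa := sqrt (c ^ 2 + 2 * c + (1 - 2 * mu) ^ 2)) in *.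
    assert (Hr : 4 * (s * s) / ((x + Aa) * (x + Aa)) <= 1 / (x * x)).
    { assert (Hx2 : x > 2 + 4 / eps) by (unfold x; lra).
      assert (4 * (s * s) <= 1) by nra. assert (x * x <= (x + Aa) * (x + Aa)) by nra.
      assert (0 < x * x) by nra. apply div_le_cross; nra. }
    assert (Hx2 : x > 2 + 4 / eps) by (unfold x; lra).
    assert (0 < 4 * (s * s) / ((x + Aa) * (x + Aa))) by (apply Rdiv_lt_0_compat; nra).
    assert (1 / (x * x) <= 1 / x) by (apply div_le_cross; nra).
    assert (4 * (1 / x) < eps).
    { replace (4 * (1 / x)) with (4 / x) by (field; lra). apply Rlt_div_l'. lra.
      assert (x > 4 / eps) by lra. apply Rmult_lt_reg_r with (/ eps). apply Rinv_0_lt_compat; lra.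
      replace (eps * x * / eps) with x by (field; lra). lra. }
    assert (1 / x <= 1/2) by (apply Rle_div_l; lra).
    pose proof (h1_close (4 * (s * s) / ((x + Aa) * (x + Aa))) ltac:(lra)). lra.
  - intros M. destruct (F_unb M) as [del [Hd HF]].
    exists (Rmin 1 (del * del * (s * s) / 3)). split.
    { apply Rmin_glb_lt. lra. apply Rdiv_lt_0_compat; [|lra]. apply Rmult_lt_0_compat; nra. }
    intros c Hc. pose proof (Rmin_l 1 (del * del * (s * s) / 3)). pose proof (Rmin_r 1 (del * del * (s * s) / 3)).
    destruct (int_facts mu c Hmu ltac:(lra)) as [X1 [A1 [B1 [C1 [D1 R1]]]]].
    rewrite R1. cbn [ER_lt ER_close ER_gt]. fold s in X1, A1, B1, C1, D1 |- *.
    set (x := - c - 1) in *. set (Aa := sqrt (c ^ 2 + 2 * c + (1 - 2 * mu) ^ 2)) in *.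
    set (r := (x - Aa) / (x + Aa)) in *.
    assert (0 < r < 1).
    { rewrite C1. split. apply Rdiv_lt_0_compat; nra. apply Rlt_div_l'; nra. }
    assert (Hu : x - 2 * s < del * del * (s * s) / 3) by (unfold x; rewrite HJ in Hc; lra).
    assert (Aa * Aa < (del * s) * (del * s)).
    { rewrite A1. assert (x - 2 * s < 1) by (unfold x; rewrite HJ in Hc; lra).
      assert (Efac : x * x - 4 * (s * s) = (x - 2 * s) * (x - 2 * s + 4 * s)) by ring.
      assert (0 < x - 2 * s) by lra. rewrite Efac.
      assert (x - 2 * s + 4 * s < 3) by lra.
      apply Rle_lt_trans with ((x - 2 * s) * 3). apply Rmult_le_compat_l; lra.
      lra. }
    assert (Aa < del * s).
    { destruct (Rlt_le_dec Aa (del * s)) as [h|h]; auto. exfalso. assert (0 < del * s) by nra.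
      assert ((del * s) * (del * s) <= Aa * Aa) by (apply Rmult_le_compat; lra). lra. }
    assert (1 - r < del).
    { rewrite D1. apply Rlt_div_l'. lra. nra. }
    pose proof (HF r ltac:(lra)). pose proof (h1_ge_F r ltac:(lra)). lra.
Qed.

Theorem proposition1 (mu : R) (Hmu : 0 < mu <= 1 / 2) :
  (* (a) *)
  (strictly_increasing_on (fun c => c < c_J mu) (R_int mu)
   /\ lim_minfty_fin (R_int mu) 1
   /\ lim_left_inf (R_int mu) (c_J mu))
  /\
  (* (b) *)
  (strictly_increasing_on (fun c => c < 0) (R_ext_E mu)
   /\ lim_minfty_fin (R_ext_E mu) 1
   /\ (mu = 1 / 2 -> lim_left_inf (R_ext_E mu) 0))
  /\
  (* (c) *)
  (strictly_increasing_on (fun c => c < c_h mu) (R_ext_M mu)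
   /\ lim_minfty_fin (R_ext_M mu) 1
   /\ lim_left_inf (R_ext_M mu) (c_h mu)
   /\ (forall c, c_h mu < c < 0 -> R_ext_M mu c = PInf))
  /\
  (* (d) *)
  (strictly_decreasing_on (fun c => c_J mu < c < c_e) (R_dou mu)
   /\ lim_right_inf (R_dou mu) (c_J mu)
   /\ lim_left_fin (R_dou mu) c_e 0
   /\ (forall c, c_e < c < 0 -> R_dou mu c = Fin 0))
  /\
  (* (e) *)
  (forall c, c_J mu < c < c_h mu -> R_hyp mu c = PInf)
  /\
  (* (f) *)
  (strictly_increasing_on (fun c => c_e < c < 0) (R_ell mu)
   /\ lim_right_fin (R_ell mu) c_e 0
   /\ lim_left_fin (R_ell mu) 0 1).
Proof.
  split; [apply parta; auto|].
  split; [apply partb; auto|].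
  split; [apply partc; auto|].
  split; [apply partd; auto|].
  split; [intros; reflexivity|].
  apply partf; auto.
Qed.
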